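(* For $b\ge 0$ let $a_b$ be the total number of cards for $b$ balls (so $a_0=1$, $a_1=2$, $a_2=7$). Then for all $b\ge 3$, \[ a_b=4a_{b-1}-2a_{b-2}. \]
   Context: For an integer $b\ge 0$, an ordered partition of $b$ is a finite sequence $(q_1,\ldots,q_k)$ of positive integers summing to $b$ (for $b=0$ the only one is the empty sequence). An ordered partition $(q_1,\ldots,q_k)$ with $k\ge1$ is nontrivially embedded into an ordered partition $(r_1,\ldots,r_\ell)$ by a choice of indices $1\le i_2<i_3<\cdots<i_k\le \ell$ with $q_j\le r_{i_j}$ for $2\le j\le k$; different index tuples count as different embeddings. A card for $b$ balls is either (i) a trivial card, given by an ordered partition $q$ of $b$, whose left and right partitions are both $q$; or (ii) a throw card, given by ordered partitions $q=(q_1,\ldots,q_k)$ ($k\ge1$) and $r=(r_1,\ldots,r_\ell)$ of $b$ together with a nontrivial embedding $(i_2,\ldots,i_k)$ of $q$ into $r$; its left partition is $q$ and its right partition is $r$. Different index tuples give different cards, and a throw card is distinct from the trivial card even when $q=r$. *)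

(* Defs.v *)
From mathcomp Require Import all_boot.
Set Implicit Arguments. Unset Strict Implicit. Unset Printing Implicit Defensive.

Fixpoint seqs_upto (n m : nat) : seq (seq nat) :=
  match n with
  | 0 => [:: [::]]
  | n'.+1 => [::] :: [seq x :: s | x <- iota 0 m.+1, s <- seqs_upto n' m]
  end.

Definition is_ordpart (b : nat) (q : seq nat) : bool :=
  all (fun x => 0 < x) q && (sumn q == b).

(* The ordered partitions of b (every such q has length <= b and parts <= b). *)
Definition ordparts (b : nat) : seq (seq nat) :=
  [seq q <- seqs_upto b b | is_ordpart b q].

(* idx = [:: i_2; ...; i_k] (1-based indices) is a nontrivial embedding of
   q = (q_1,...,q_k), k >= 1, into r = (r_1,...,r_l):
   1 <= i_2 < ... < i_k <= l and q_j <= r_{i_j} for 2 <= j <= k. *)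
Definition is_embedding (q r idx : seq nat) : bool :=
  [&& 0 < size q,
      size idx == (size q).-1,
      sorted ltn idx,
      all (fun i => (0 < i) && (i <= size r)) idx &
      all2 (fun qj i => qj <= nth 0 r i.-1) (behead q) idx].

Definition n_trivial (b : nat) : nat := size (ordparts b).

(* Number of throw cards for b balls: triples (q, r, embedding); the index
   tuples have length <= b and entries <= b, so they all occur in
   seqs_upto b b. *)
Definition n_throw (b : nat) : nat :=
  \sum_(q <- ordparts b) \sum_(r <- ordparts b)
     count (is_embedding q r) (seqs_upto b b).

Definition a (b : nat) : nat := n_trivial b + n_throw b.

(* Main.v *)
Require Import Defs.
From mathcomp Require Import all_boot zify.

Lemma seqs_upto_S n m : seqs_upto n.+1 m =
  [::] :: [seq x :: s | x <- iota 0 m.+1, s <- seqs_upto n m].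
Proof. by []. Qed.

Lemma mem_seqs_upto n m s :
  (s \in seqs_upto n m) = (size s <= n) && all (fun x => x <= m) s.
Proof.
elim: n s => [|n IH] [|x s] //; rewrite seqs_upto_S in_cons.
have -> : (x :: s == [::]) = false by [].
rewrite orFb; apply/allpairsP/idP.
- case=> -[y t] [Hy Ht [-> ->]]; rewrite mem_iota in Hy; rewrite IH in Ht.
  move/andP: Ht => [Ht1 Ht2]; move: Hy Ht1 Ht2 => /= Hy Ht1 ->; rewrite andbT; apply/andP; split; lia.
- move=> /= /andP[Hs /andP[Hx Ha]]; exists (x, s); split => //.
  + change (x \in iota 0 m.+1); rewrite mem_iota; apply/andP; split; lia.
  + by change (s \in seqs_upto n m); rewrite IH -ltnS Hs Ha.
Qed.

Lemma uniq_seqs_upto n m : uniq (seqs_upto n m).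
Proof.
elim: n => [|n IH] //; rewrite seqs_upto_S cons_uniq; apply/andP; split.
- by apply/allpairsP; case=> -[y t] /= [_ _].
- apply: allpairs_uniq => //; first exact: iota_uniq.
  by move=> [x1 s1] [x2 s2] _ _ /= [-> ->].
Qed.
Lemma big_seqs_norm (P : pred (seq nat)) (G : seq nat -> nat) n m n' m' :
 (forall s, P s -> (size s <= n) && all (fun x => x <= m) s) ->
 (forall s, P s -> (size s <= n') && all (fun x => x <= m') s) ->
 \sum_(s <- seqs_upto n m | P s) G s = \sum_(s <- seqs_upto n' m' | P s) G s.
Proof.
move=> H1 H2; rewrite -[LHS]big_filter -[RHS]big_filter; apply: perm_big; apply: uniq_perm;
  try exact/filter_uniq/uniq_seqs_upto.
move=> s; rewrite !mem_filter !mem_seqs_upto.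
case Ps: (P s) => //=; by rewrite H1 // H2.
Qed.

Lemma big_seqs_S n m (F : seq nat -> nat) :
  \sum_(s <- seqs_upto n.+1 m) F s =
  F [::] + \sum_(i < m.+1) \sum_(s <- seqs_upto n m) F (nat_of_ord i :: s).
Proof.
rewrite seqs_upto_S big_cons big_allpairs_dep; congr (_ + _).
by rewrite -(big_mkord xpredT (fun i : nat => \sum_(s <- seqs_upto n m) F (i :: s))) /index_iota subn0.
Qed.

Lemma count_sum (T : Type) (P : pred T) s : count P s = \sum_(x <- s) P x.
Proof. by rewrite -sum1_count big_mkcond; apply: eq_bigr => x _; case: (P x). Qed.

Lemma size_le_sumn t : all (fun x => 0 < x) t -> size t <= sumn t.
Proof. elim: t => //= x t IH /andP[Hx Ht]; move: (IH Ht); lia. Qed.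

Lemma all_le_sumn t : all (fun x => x <= sumn t) t.
Proof.
elim: t => //= x t IH; apply/andP; split; first by lia.
by apply: sub_all IH => y; lia.
Qed.

Lemma sum_ind_le N x : \sum_(y < N.+1) ((0 < y) && (y <= x)) = minn x N.
Proof.
elim: N => [|N IH]; first by rewrite big_ord_recr big_ord0 /=; lia.
rewrite big_ord_recr IH /=; lia.
Qed.

Lemma sum_ind_eq N x : \sum_(y < N) (y == x :> nat) = (x < N).
Proof.
elim: N => [|N IH]; first by rewrite big_ord0.
rewrite big_ord_recr IH /=; case: eqP; lia.
Qed.

Definition emb' (t r : seq nat) (o : nat) (idx : seq nat) : bool :=
  [&& size idx == size t, sorted ltn idx,
      all (fun i => (o < i) && (i <= o + size r)) idx &
      all2 (fun qj i => qj <= nth 0 (nseq o 0 ++ r) i.-1) t idx].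

Lemma emb_is q1 t r idx : is_embedding (q1 :: t) r idx = emb' t r 0 idx.
Proof. by []. Qed.

Lemma nth_shift o x r j : o.+1 < j ->
  nth 0 (nseq o 0 ++ x :: r) j.-1 = nth 0 (nseq o.+1 0 ++ r) j.-1.
Proof.
move=> Hj; rewrite !nth_cat !size_nseq.
have -> : (j.-1 < o) = false by lia.
have -> : (j.-1 < o.+1) = false by lia.
have -> : j.-1 - o = (j.-1 - o.+1).+1 by lia.
by [].
Qed.

Lemma L_all2 o x r t idx : all (fun j => o.+1 < j) idx ->
  all2 (fun y j => y <= nth 0 (nseq o 0 ++ x :: r) j.-1) t idx =
  all2 (fun y j => y <= nth 0 (nseq o.+1 0 ++ r) j.-1) t idx.
Proof.
elim: idx t => [|j idx IH] [|y t] //= /andP[Hj Ha].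
by rewrite nth_shift // IH.
Qed.

Lemma L_all o (x : nat) (r idx : seq nat) : all (fun j => o.+1 < j) idx ->
  all (fun i => (o < i) && (i <= o + size (x::r))) idx =
  all (fun i => (o.+1 < i) && (i <= o.+1 + size r)) idx.
Proof.
move=> Ha; apply: eq_in_all => j Hj /=.
move/allP: Ha => /(_ j Hj) Hj'.
have -> : (o < j) = true by lia.
have -> : (o.+1 < j) = true by lia.
by rewrite addnS addSn.
Qed.

Lemma emb_shift t x r o idx : all (fun j => o.+1 < j) idx ->
  emb' t (x :: r) o idx = emb' t r o.+1 idx.
Proof. by move=> Ha; rewrite /emb' L_all // L_all2. Qed.

Definition Bp (t : seq nat) x r o (idx : seq nat) : bool :=
  match idx, t with
  | i :: idx', y :: t' => [&& i == o.+1, y <= x & emb' t' r o.+1 idx']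
  | _, _ => false
  end.

Lemma emb_cons t x r o idx :
  (emb' t (x :: r) o idx : nat) = emb' t r o.+1 idx + Bp t x r o idx.
Proof.
case: idx => [|i idx]; first by rewrite emb_shift // addn0.
case: (ltngtP i o.+1) => Hi.
- have E1 : forall rr oo, o <= oo -> emb' t rr oo (i :: idx) = false.
    move=> rr oo Hoo; rewrite /emb' /=.
    have -> : (oo < i) = false by lia.
    by rewrite /= !andbF.
  rewrite E1 // E1 //.
  rewrite /Bp; case: t {E1} => // y t.
  have -> : (i == o.+1) = false by lia.
  by [].
- case Hs: (sorted ltn (i :: idx)).
  + rewrite emb_shift.
    * rewrite /Bp; case: t => [|y t]; first by rewrite addn0.
      have -> : (i == o.+1) = false by lia.
      by rewrite addn0.
    * move: Hs; rewrite /= (path_sortedE ltn_trans) => /andP[Ha _].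
      rewrite /= Hi /=; apply: sub_all Ha => j; lia.
  + have E : forall rr oo, emb' t rr oo (i :: idx) = false.
      by move=> rr oo; rewrite /emb' Hs /= andbF.
    rewrite !E /Bp; case: t {E} => [|y t] //.
    have -> : (i == o.+1) = false by lia.
    by [].
- subst i.
  have -> : emb' t r o.+1 (o.+1 :: idx) = false.
    by rewrite /emb' /= ltnn /= !andbF.
  rewrite add0n /Bp; case: t => [|y t]; first by rewrite /emb'.
  rewrite eqxx /=.
  rewrite /emb' /= (path_sortedE ltn_trans) nth_cat size_nseq ltnn subnn /=.
  case Ha: (all (fun j => o.+1 < j) idx).
  + rewrite L_all // L_all2 // eqSS /=.
    have -> : (o < o.+1 <= o + (size r).+1) = true by apply/andP; split; lia.
    rewrite andTb.
    case: (y <= x); rewrite /= ?andbF //.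
  + case Hb: (all (fun i => (o.+1 < i) && (i <= o.+1 + size r)) idx).
    * have : all (fun j => o.+1 < j) idx by apply: sub_all Hb => j /andP[].
      by rewrite Ha.
    * by rewrite /= !andbF.
Qed.


Definition Nc t r o := \sum_(idx <- seqs_upto (size t) (o + size r)) emb' t r o idx.

Lemma Nc_cons t x r o : Nc t (x :: r) o =
  Nc t r o.+1 + (if t is y :: t' then (y <= x) * Nc t' r o.+1 else 0).
Proof.
rewrite /Nc /= addnS -addSn.
under eq_bigr do rewrite emb_cons.
rewrite big_split /=; congr (_ + _).
case: t => [|y t].
  by rewrite big1 // => idx _; case: idx.
rewrite [size _]/= big_seqs_S add0n.
have E : forall i : 'I_(o.+1 + size r).+1,
  \sum_(s <- seqs_upto (size t) (o.+1 + size r)) Bp (y :: t) x r o (nat_of_ord i :: s) =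
  (i == o.+1 :> nat) * ((y <= x) * Nc t r o.+1).
  move=> i; rewrite /Nc !big_distrr /=; apply: eq_bigr => s _.
  by rewrite /Bp -!mulnb.
rewrite (eq_bigr _ (fun i _ => E i)) -big_distrl /= sum_ind_eq.
have -> : o.+1 < (o.+1 + size r).+1 by lia.
by rewrite mul1n.
Qed.

Lemma Nc_nil_nil o : Nc [::] [::] o = 1.
Proof. by rewrite /Nc /= big_cons big_nil. Qed.

Lemma Nc_cons_nil y t o : Nc (y :: t) [::] o = 0.
Proof.
rewrite /Nc big1 // => -[|i idx] _ //.
rewrite /emb' /=.
have -> : (o < i <= o + 0) = false by apply/negbTE/negP => /andP[]; lia.
by rewrite /= !andbF.
Qed.

Definition F r o B :=
  \sum_(t <- seqs_upto B B | all (fun x => 0 < x) t && (sumn t < B)) Nc t r o.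

Lemma F_nil o B : F [::] o B = (0 < B).
Proof.
case: B => [|n]; first by rewrite /F /= big_cons big_nil.
rewrite /F big_mkcond big_seqs_S /= Nc_nil_nil big1 // => i _.
by rewrite big1 // => s _; rewrite Nc_cons_nil; case: ifP.
Qed.

Lemma F_cons x r o B : F (x :: r) o B =
  F r o.+1 B + \sum_(y < B.+1) ((0 < y) && (y <= x)) * F r o.+1 (B - y).
Proof.
rewrite /F; under eq_bigr do rewrite Nc_cons.
rewrite big_split /=; congr (_ + _).
case: B => [|n].
  by rewrite big_cons big_nil big_ord_recr big_ord0.
rewrite big_mkcond big_seqs_S /= add0n.
apply: eq_bigr => i _.
rewrite (@big_seqs_norm _ _ (n.+1 - i) (n.+1 - i) n n.+1); first last.
- move=> s /andP[Hp Hs]; have := @size_le_sumn s Hp.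
  have := all_le_sumn s; move=> Ha Hz; apply/andP; split; first by lia.
  by apply: sub_all Ha => z; lia.
- move=> s /andP[Hp Hs]; have := @size_le_sumn s Hp.
  have := all_le_sumn s; move=> Ha Hz; apply/andP; split; first by lia.
  by apply: sub_all Ha => z; lia.
rewrite [in RHS]big_mkcond big_distrr /=; apply: eq_bigr => s _.
have -> : (nat_of_ord i + sumn s < n.+1) = (sumn s < n.+1 - i).
  by apply/idP/idP; lia.
case: (all _ s); case: (sumn s < n.+1 - i); case: (0 < nat_of_ord i);
  case: (nat_of_ord i <= x); by rewrite /= ?muln0 ?mul0n ?mul1n.
Qed.

Lemma prod_gt0 (r : seq nat) : 0 < \prod_(x <- r) x.+1.
Proof. elim: r => [|x r IH]; first by rewrite big_nil. by rewrite big_cons muln_gt0. Qed.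

Lemma F_big r o B : sumn r < B -> F r o B = \prod_(x <- r) x.+1.
Proof.
elim: r o B => [|x r IH] o B /= HB.
  by rewrite F_nil big_nil HB.
rewrite F_cons IH; last by lia.
have E : forall y : 'I_B.+1, ((0 < y) && (y <= x)) * F r o.+1 (B - y) =
   ((0 < y) && (y <= x)) * \prod_(x <- r) x.+1.
  move=> y; case Hy: ((0 < y) && (y <= x)) => //.
  by rewrite IH //; move/andP: Hy => [? ?]; lia.
rewrite (eq_bigr _ (fun y _ => E y)) -big_distrl /= sum_ind_le big_cons.
have -> : minn x B = x by lia.
by rewrite mulSn.
Qed.

Lemma F_exact r o : all (fun x => 0 < x) r -> F r o (sumn r) = \prod_(x <- r) x.+1 - 1.
Proof.
elim: r o => [|x r IH] o /=.
  by rewrite F_nil big_nil.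
move=> /andP[Hx Hr].
rewrite F_cons F_big; last by lia.
set P := \prod_(x <- r) x.+1.
have HP : 0 < P by apply: prod_gt0.
have E : forall y : 'I_(x + sumn r).+1,
   ((0 < y) && (y <= x)) * F r o.+1 (x + sumn r - y) + (y == x :> nat) =
   ((0 < y) && (y <= x)) * P.
  move=> y; case: (eqVneq (nat_of_ord y) x) => Hyx.
  - rewrite Hyx Hx leqnn /= mul1n addKn IH //; lia.
  - case Hy: ((0 < y) && (y <= x)); last by [].
    rewrite addn0 F_big //; move/andP: Hy => [? ?]; lia.
have H : \sum_(y < (x + sumn r).+1) ((0 < y) && (y <= x)) * F r o.+1 (x + sumn r - y)
   + \sum_(y < (x + sumn r).+1) (y == x :> nat) =
   \sum_(y < (x + sumn r).+1) ((0 < y) && (y <= x)) * P.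
  by rewrite -big_split; apply: eq_bigr => y _; exact: E.
move: H; rewrite -big_distrl /= sum_ind_le sum_ind_eq.
have -> : minn x (x + sumn r) = x by lia.
have -> : x < (x + sumn r).+1 by lia.
rewrite big_cons -/P mulSn => H.
have : 1 <= x * P by rewrite muln_gt0 Hx HP.
lia.
Qed.

Lemma count_norm (P : pred (seq nat)) n m n' m' :
 (forall s, P s -> (size s <= n) && all (fun x => x <= m) s) ->
 (forall s, P s -> (size s <= n') && all (fun x => x <= m') s) ->
 count P (seqs_upto n m) = count P (seqs_upto n' m').
Proof. by move=> H1 H2; rewrite -!sum1_count; apply: big_seqs_norm. Qed.

Lemma emb_bound t r o idx : emb' t r o idx ->
  (size idx <= size t) && all (fun i => i <= o + size r) idx.
Proof.
case/and4P => /eqP -> _ Ha _; rewrite leqnn /=.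
by apply: sub_all Ha => i /andP[].
Qed.

Lemma throw_r n r : is_ordpart n.+1 r ->
  \sum_(q <- ordparts n.+1) count (is_embedding q r) (seqs_upto n.+1 n.+1)
  = \prod_(x <- r) x.+1 - 1.
Proof.
move=> Hr; move: (Hr) => /andP[Hp /eqP Hs].
have Hsr : size r <= n.+1 by rewrite -Hs; apply: size_le_sumn.
rewrite -(@F_exact r 0 Hp) Hs.
rewrite /ordparts big_filter big_mkcond big_seqs_S.
have -> : is_ordpart n.+1 [::] = false by [].
rewrite add0n exchange_big.
rewrite /F (@big_seqs_norm _ _ n.+1 n.+1 n n.+1); first last.
- move=> s /andP[Hp' Hs']; have := @size_le_sumn s Hp'.
  have := all_le_sumn s; move=> Ha Hz; apply/andP; split; first by lia.
  by apply: sub_all Ha => z; lia.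
- move=> s /andP[Hp' Hs']; have := @size_le_sumn s Hp'.
  have := all_le_sumn s; move=> Ha Hz; apply/andP; split; first by lia.
  by apply: sub_all Ha => z; lia.
rewrite [RHS]big_mkcond; apply: eq_bigr => t _.
set K := (if _ then _ else _).
have E : forall i : 'I_n.+2,
  (if is_ordpart n.+1 (nat_of_ord i :: t)
   then count (is_embedding (nat_of_ord i :: t) r) (seqs_upto n.+1 n.+1) else 0)
  = (nat_of_ord i == n.+1 - sumn t) * K.
  move=> i; rewrite /K.
  have -> : is_ordpart n.+1 (nat_of_ord i :: t) = (0 < nat_of_ord i) &&
     all (fun x => 0 < x) t && (nat_of_ord i + sumn t == n.+1) by [].
  case: ifP => [/andP[/andP[Hi0 Hpt] /eqP Hi] | Hc].
  - have Hlt : sumn t < n.+1 by lia.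
    have Hi' : (nat_of_ord i == n.+1 - sumn t) = true by apply/eqP; lia.
    rewrite Hpt Hlt Hi' mul1n (eq_count (emb_is (nat_of_ord i) t r)) /Nc -count_sum.
    have Hst : size t <= n.+1 by have := @size_le_sumn t Hpt; lia.
    apply: count_norm => idx /emb_bound /andP[H1 H2]; apply/andP; split.
    + lia.
    + by apply: sub_all H2 => z; lia.
    + by [].
    + by apply: sub_all H2 => z; lia.
  - case: (eqVneq (nat_of_ord i) (n.+1 - sumn t)) => Hi; last by rewrite mul0n.
    case Hpt: (all _ t); last by rewrite muln0.
    case Hlt: (sumn t < n.+1); last by rewrite muln0.
    move: Hc; rewrite Hpt Hi andbT.
    have -> : (0 < n.+1 - sumn t) = true by lia.
    have -> : (n.+1 - sumn t + sumn t == n.+1) = true by apply/eqP; lia.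
    by [].
rewrite (eq_bigr _ (fun i _ => E i)) -big_distrl /= sum_ind_eq.
have -> : n.+1 - sumn t < n.+2 by lia.
by rewrite mul1n.
Qed.

Definition V s := \sum_(r <- ordparts s) \prod_(x <- r) x.+1.

Lemma a_V n : a n.+1 = V n.+1.
Proof.
rewrite /a /n_trivial /n_throw /V -sum1_size exchange_big -big_split.
apply: eq_big_seq => r; rewrite mem_filter => /andP[Hr _].
change (1 + \sum_(q <- ordparts n.+1) count (is_embedding q r) (seqs_upto n.+1 n.+1) = \prod_(x <- r) x.+1).
rewrite throw_r // addnC subnK //; exact: prod_gt0.
Qed.

Lemma V_S n : V n.+1 = \sum_(x < n.+1) x.+2 * V (n - x).
Proof.
rewrite /V /ordparts big_filter big_mkcond big_seqs_S.
have -> : is_ordpart n.+1 [::] = false by [].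
rewrite add0n big_ord_recl.
rewrite big1; last first.
  by move=> t _.
rewrite add0n; apply: eq_bigr => j _.
rewrite big_filter (@big_seqs_norm _ _ (n - j) (n - j) n n.+1); first last.
- move=> s /andP[Hp /eqP Hs]; have := @size_le_sumn s Hp.
  have := all_le_sumn s; move=> Ha Hz; apply/andP; split; first by lia.
  by apply: sub_all Ha => z; lia.
- move=> s /andP[Hp /eqP Hs]; have := @size_le_sumn s Hp.
  have := all_le_sumn s; move=> Ha Hz; apply/andP; split; first by lia.
  by apply: sub_all Ha => z; lia.
rewrite [in RHS]big_mkcond big_distrr; apply: eq_bigr => t _.
have -> : is_ordpart n.+1 (nat_of_ord (lift ord0 j) :: t) =
  all (fun x => 0 < x) t && (sumn t == n - j).
  rewrite /is_ordpart lift0 /=; congr (_ && _); apply/idP/idP => /eqP H; apply/eqP;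
  have := ltn_ord j; lia.
rewrite /is_ordpart lift0 big_cons.
by case: ifP => _ //=; rewrite muln0.
Qed.

Definition Pv s := \sum_(x < s.+1) V (s - x).

Lemma V_SS s : V s.+2 = 3 * V s.+1 + Pv s.
Proof.
rewrite V_S big_ord_recl /= subn0.
have E : forall x : 'I_s.+1, (bump 0 x).+2 * V (s.+1 - bump 0 x) =
   x.+2 * V (s - x) + V (s - x).
  by move=> x; rewrite /bump /= add1n subSS mulSn addnC.
by rewrite (eq_bigr _ (fun x _ => E x)) big_split /= -V_S /Pv addnA [2 * _ + _]addnC -mulSn.
Qed.

Lemma Pv_S s : Pv s.+1 = V s.+1 + Pv s.
Proof.
rewrite /Pv big_ord_recl subn0; congr (_ + _).
Qed.

Theorem theorem4 (b : nat) : 3 <= b -> a b + 2 * a (b - 2) = 4 * a (b - 1).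
Proof.
case: b => [|[|[|s]]] // _.
have -> : s.+3 - 2 = s.+1 by lia.
have -> : s.+3 - 1 = s.+2 by lia.
rewrite !a_V V_SS Pv_S (V_SS s); lia.
Qed.
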